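(* For every $n\ge1$, no proper subset of $F_n$ that contains both $a_1$ and $a_{5n+3}$ is full. Consequently (since $F_n$ is full) the geodesic between $a_1$ and $a_{5n+3}$ in $F_n$, i.e. the smallest full subset of $F_n$ containing both points, is all of $F_n$, which has $5n+4$ points.
   Context: Let $X_1,X_2,X_3$ be pairwise disjoint nonempty sets and $\Omega=X_1\times X_2\times X_3$, with projections $\Pi_i:\Omega\to X_i$. A set $S\subset\Omega$ is good if every function $f:S\to\mathbb C$ can be written $f(w_1,w_2,w_3)=u_1(w_1)+u_2(w_2)+u_3(w_3)$ for all $(w_1,w_2,w_3)\in S$, for some functions $u_i:X_i\to\mathbb C$. A set $S$ is full if it is a maximal good subset of $\Pi_1S\times\Pi_2S\times\Pi_3S$. Construction: fix pairwise distinct elements $x_1,y_1,\alpha_{5k-4},\alpha_{5k-1}$ ($k\ge1$) of $X_1$; pairwise distinct elements $x_2,y_2,\alpha_{5k-3},\alpha_{5k}$ ($k\ge1$) of $X_2$; pairwise distinct elements $x_3,z_3,\alpha_{5k-2}$ ($k\ge1$) of $X_3$. Set the convention $\alpha_{-3}:=y_2$, $\alpha_{-2}:=z_3$. Define $a_1=(x_1,x_2,x_3)$, $a_2=(y_1,y_2,x_3)$, $a_3=(y_1,x_2,z_3)$ and for $n\ge1$: $a_{5n-1}=(\alpha_{5n-4},\alpha_{5n-3},\alpha_{5n-2})$, $a_{5n}=(\alpha_{5n-1},\alpha_{5n},\alpha_{5n-2})$, $a_{5n+1}=(\alpha_{5n-4},\alpha_{5n},\alpha_{5n-7})$, $a_{5n+2}=(\alpha_{5n-1},\alpha_{5n-3},x_3)$,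 $a_{5n+3}=(x_1,\alpha_{5n-8},\alpha_{5n-2})$. Let $D_n=\{a_1,\dots,a_{5n+3}\}$, $b_n=(\alpha_{5n-1},y_2,z_3)$ and $F_n=D_n\cup\{b_n\}$. *)

(* Defs.v *)
From Stdlib Require Import Reals Arith.
Open Scope R_scope.

(* The complex numbers, as the additive group R x R (goodness only uses
   addition of complex numbers). *)
Definition C : Type := (R * R)%type.
Definition Cadd (z w : C) : C := (fst z + fst w, snd z + snd w).

Section Sets.
Context {X1 X2 X3 : Type}.
Definition Omega : Type := (X1 * X2 * X3)%type.
Definition P1 (w : Omega) : X1 := fst (fst w).
Definition P2 (w : Omega) : X2 := snd (fst w).
Definition P3 (w : Omega) : X3 := snd w.

Definition subset (S T : Omega -> Prop) : Prop := forall w, S w -> T w.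

Definition good (S : Omega -> Prop) : Prop :=
  forall f : {w : Omega | S w} -> C,
    exists (u1 : X1 -> C) (u2 : X2 -> C) (u3 : X3 -> C),
      forall w : {w : Omega | S w},
        f w = Cadd (Cadd (u1 (P1 (proj1_sig w))) (u2 (P2 (proj1_sig w))))
                   (u3 (P3 (proj1_sig w))).

Definition box (S : Omega -> Prop) (w : Omega) : Prop :=
  (exists v, S v /\ P1 v = P1 w) /\
  (exists v, S v /\ P2 v = P2 w) /\
  (exists v, S v /\ P3 v = P3 w).

Definition full (S : Omega -> Prop) : Prop :=
  good S /\
  forall T : Omega -> Prop, good T -> subset S T -> subset T (box S) -> subset T S.
End Sets.

(* The elements alpha_k (k >= 1) are encoded as
     alpha_{5k-4} = al1 k, alpha_{5k-1} = al4 k   (in X1)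
     alpha_{5k-3} = al2 k, alpha_{5k}   = al5 k   (in X2)
     alpha_{5k-2} = al3 k                          (in X3)
   for k >= 1 (values at k = 0 are irrelevant). *)
Record config (X1 X2 X3 : Type) := Config {
  x1 : X1; y1 : X1; x2 : X2; y2 : X2; x3 : X3; z3 : X3;
  al1 : nat -> X1; al4 : nat -> X1;
  al2 : nat -> X2; al5 : nat -> X2;
  al3 : nat -> X3 }.
Arguments Config {X1 X2 X3}.
Arguments x1 {X1 X2 X3}. Arguments y1 {X1 X2 X3}.
Arguments x2 {X1 X2 X3}. Arguments y2 {X1 X2 X3}.
Arguments x3 {X1 X2 X3}. Arguments z3 {X1 X2 X3}.
Arguments al1 {X1 X2 X3}. Arguments al4 {X1 X2 X3}.
Arguments al2 {X1 X2 X3}. Arguments al5 {X1 X2 X3}.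
Arguments al3 {X1 X2 X3}.

Definition config_ok {X1 X2 X3 : Type} (c : config X1 X2 X3) : Prop :=
  x1 c <> y1 c /\
  (forall k, (1 <= k)%nat -> al1 c k <> x1 c /\ al1 c k <> y1 c /\
                             al4 c k <> x1 c /\ al4 c k <> y1 c) /\
  (forall k l, (1 <= k)%nat -> (1 <= l)%nat ->
     al1 c k <> al4 c l /\ (al1 c k = al1 c l -> k = l) /\ (al4 c k = al4 c l -> k = l)) /\
  x2 c <> y2 c /\
  (forall k, (1 <= k)%nat -> al2 c k <> x2 c /\ al2 c k <> y2 c /\
                             al5 c k <> x2 c /\ al5 c k <> y2 c) /\
  (forall k l, (1 <= k)%nat -> (1 <= l)%nat ->
     al2 c k <> al5 c l /\ (al2 c k = al2 c l -> k = l) /\ (al5 c k = al5 c l -> k = l)) /\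
  x3 c <> z3 c /\
  (forall k, (1 <= k)%nat -> al3 c k <> x3 c /\ al3 c k <> z3 c) /\
  (forall k l, (1 <= k)%nat -> (1 <= l)%nat -> al3 c k = al3 c l -> k = l).

Section Construction.
Context {X1 X2 X3 : Type} (c : config X1 X2 X3).

(* alpha_{5n-7} (in X3), with alpha_{-2} = z3 *)
Definition alpha_5n_7 (n : nat) : X3 :=
  match n with 0 | 1 => z3 c | S m => al3 c m end.
(* alpha_{5n-8} (in X2), with alpha_{-3} = y2 *)
Definition alpha_5n_8 (n : nat) : X2 :=
  match n with 0 | 1 => y2 c | S m => al2 c m end.

(* the five points a_{5n-1}, a_{5n}, a_{5n+1}, a_{5n+2}, a_{5n+3}
   for j = 0,1,2,3,4 respectively (n >= 1) *)
Definition a_block (n j : nat) : @Omega X1 X2 X3 :=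
  match j with
  | 0 => (al1 c n, al2 c n, al3 c n)
  | 1 => (al4 c n, al5 c n, al3 c n)
  | 2 => (al1 c n, al5 c n, alpha_5n_7 n)
  | 3 => (al4 c n, al2 c n, x3 c)
  | _ => (x1 c, alpha_5n_8 n, al3 c n)
  end.

(* a_m for m >= 1 (a_0 is a dummy value) *)
Definition a (m : nat) : @Omega X1 X2 X3 :=
  match m with
  | 0 | 1 => (x1 c, x2 c, x3 c)
  | 2 => (y1 c, y2 c, x3 c)
  | 3 => (y1 c, x2 c, z3 c)
  | _ => a_block (S ((m - 4) / 5)) ((m - 4) mod 5)
  end.

Definition D (n : nat) (w : @Omega X1 X2 X3) : Prop :=
  exists m, (1 <= m <= 5 * n + 3)%nat /\ w = a m.

Definition b (n : nat) : @Omega X1 X2 X3 := (al4 c n, y2 c, z3 c).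

Definition F (n : nat) (w : @Omega X1 X2 X3) : Prop := D n w \/ w = b n.
End Construction.

(* Main.v *)
Require Import Defs.
From Stdlib Require Import Reals Arith.
From Stdlib Require Import Lia Lra Classical ClassicalEpsilon.
Open Scope R_scope.


Section Core.
Context {X1 X2 X3 : Type}.
Notation Om := (@Omega X1 X2 X3).

Record fn := Fn { g1 : X1 -> R; g2 : X2 -> R; g3 : X3 -> R }.
Definition evR (p : fn) (w : Om) : R := g1 p (P1 w) + g2 p (P2 w) + g3 p (P3 w).
Definition addp (S : Om -> Prop) (q : Om) : Om -> Prop := fun w => S w \/ w = q.

Lemma C_eq (z w : Defs.C) : fst z = fst w -> snd z = snd w -> z = w.
Proof. destruct z, w; simpl; intros -> ->; reflexivity. Qed.

Lemma good_empty : good (fun _ : Om => False).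
Proof. intros f. exists (fun _ => (0,0)), (fun _ => (0,0)), (fun _ => (0,0)). intros [w []]. Qed.

Lemma good_sub (S T : Om -> Prop) : (forall w, T w -> S w) -> good S -> good T.
Proof.
  intros HTS HS f.
  set (g := fun (w : {w | S w}) =>
    match excluded_middle_informative (T (proj1_sig w)) with
    | left H => f (exist _ (proj1_sig w) H) | right _ => (0,0) end).
  destruct (HS g) as (u1&u2&u3&Hu). exists u1,u2,u3. intros [w Hw].
  specialize (Hu (exist _ w (HTS w Hw))). unfold g in Hu; simpl in Hu.
  destruct (excluded_middle_informative (T w)) as [H|H]; [|contradiction].
  simpl. rewrite <- Hu. rewrite (proof_irrelevance _ Hw H). reflexivity.
Qed.

Lemma good_add (S : Om -> Prop) (t : Om) (p : fn) :
  good S -> (forall w, S w -> evR p w = 0) -> evR p t <> 0 -> good (addp S t).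
Proof.
  intros HS Hv Ht f.
  set (g := fun w : {w | S w} => f (exist _ (proj1_sig w) (or_introl (proj2_sig w)))).
  destruct (HS g) as (u1&u2&u3&Hu).
  set (ft := f (exist _ t (or_intror eq_refl))).
  set (e := Cadd (Cadd (u1 (P1 t)) (u2 (P2 t))) (u3 (P3 t))).
  set (l1 := (fst ft - fst e) / evR p t). set (l2 := (snd ft - snd e) / evR p t).
  exists (fun x => (fst (u1 x) + g1 p x * l1, snd (u1 x) + g1 p x * l2)),
         (fun x => (fst (u2 x) + g2 p x * l1, snd (u2 x) + g2 p x * l2)),
         (fun x => (fst (u3 x) + g3 p x * l1, snd (u3 x) + g3 p x * l2)).
  intros [w Hw]. simpl. destruct Hw as [Hs | Ht'].
  - specialize (Hu (exist _ w Hs)). unfold g in Hu; simpl in Hu.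
    rewrite Hu. pose proof (Hv w Hs) as Hvw. unfold evR in Hvw.
    unfold Cadd; simpl. apply C_eq; simpl.
    + replace (fst (u1 (P1 w)) + g1 p (P1 w) * l1 + (fst (u2 (P2 w)) + g2 p (P2 w) * l1) +
        (fst (u3 (P3 w)) + g3 p (P3 w) * l1)) with
        (fst (u1 (P1 w)) + fst (u2 (P2 w)) + fst (u3 (P3 w)) + (g1 p (P1 w) + g2 p (P2 w) + g3 p (P3 w)) * l1) by ring.
      rewrite Hvw. ring.
    + replace (snd (u1 (P1 w)) + g1 p (P1 w) * l2 + (snd (u2 (P2 w)) + g2 p (P2 w) * l2) +
        (snd (u3 (P3 w)) + g3 p (P3 w) * l2)) with
        (snd (u1 (P1 w)) + snd (u2 (P2 w)) + snd (u3 (P3 w)) + (g1 p (P1 w) + g2 p (P2 w) + g3 p (P3 w)) * l2) by ring.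
      rewrite Hvw. ring.
  - subst w. match goal with |- f ?x = _ => replace (f x) with ft by (unfold ft; f_equal; f_equal; apply proof_irrelevance) end.
    unfold Cadd; simpl. apply C_eq; simpl.
    + replace (fst (u1 (P1 t)) + g1 p (P1 t) * l1 + (fst (u2 (P2 t)) + g2 p (P2 t) * l1) +
        (fst (u3 (P3 t)) + g3 p (P3 t) * l1)) with (fst e + evR p t * l1) by (unfold e, evR, Cadd; simpl; ring).
      unfold l1. field. exact Ht.
    + replace (snd (u1 (P1 t)) + g1 p (P1 t) * l2 + (snd (u2 (P2 t)) + g2 p (P2 t) * l2) +
        (snd (u3 (P3 t)) + g3 p (P3 t) * l2)) with (snd e + evR p t * l2) by (unfold e, evR, Cadd; simpl; ring).
      unfold l2. field. exact Ht.
Qed.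

Definition exch (S : Om -> Prop) (w0 t : Om) : Om -> Prop := fun w => (S w /\ w <> w0) \/ w = t.

Lemma good_exch (S : Om -> Prop) (w0 t q1 q2 q3 q4 q5 : Om) (c0 c1 c2 c3 c4 c5 : R) :
  good S -> S w0 -> S q1 -> S q2 -> S q3 -> S q4 -> S q5 ->
  q1 <> w0 -> q2 <> w0 -> q3 <> w0 -> q4 <> w0 -> q5 <> w0 -> c0 <> 0 ->
  (forall p : fn, evR p t = c0 * evR p w0 + c1 * evR p q1 + c2 * evR p q2 + c3 * evR p q3
                 + c4 * evR p q4 + c5 * evR p q5) ->
  good (exch S w0 t).
Proof.
  intros HS H0 H1 H2 H3 H4 H5 N1 N2 N3 N4 N5 Hc0 Hid f.
  set (ft := f (exist _ t (or_intror eq_refl))).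
  set (fq1 := f (exist (exch S w0 t) q1 (or_introl (conj H1 N1)))).
  set (fq2 := f (exist (exch S w0 t) q2 (or_introl (conj H2 N2)))).
  set (fq3 := f (exist (exch S w0 t) q3 (or_introl (conj H3 N3)))).
  set (fq4 := f (exist (exch S w0 t) q4 (or_introl (conj H4 N4)))).
  set (fq5 := f (exist (exch S w0 t) q5 (or_introl (conj H5 N5)))).
  set (v0 := ((fst ft - c1 * fst fq1 - c2 * fst fq2 - c3 * fst fq3 - c4 * fst fq4 - c5 * fst fq5) / c0,
              (snd ft - c1 * snd fq1 - c2 * snd fq2 - c3 * snd fq3 - c4 * snd fq4 - c5 * snd fq5) / c0)).
  set (g := fun w : {w | S w} =>
    match excluded_middle_informative (proj1_sig w = w0) with
    | left _ => v0
    | right H => f (exist (exch S w0 t) (proj1_sig w) (or_introl (conj (proj2_sig w) H))) end).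
  destruct (HS g) as (u1&u2&u3&Hu).
  assert (Hq : forall q (Hs : S q) (Hn : q <> w0),
     f (exist (exch S w0 t) q (or_introl (conj Hs Hn))) = Cadd (Cadd (u1 (P1 q)) (u2 (P2 q))) (u3 (P3 q))).
  { intros q Hs Hn. specialize (Hu (exist _ q Hs)). unfold g in Hu; simpl in Hu.
    destruct (excluded_middle_informative (q = w0)) as [E|E]; [contradiction|].
    rewrite <- Hu. f_equal. f_equal. apply proof_irrelevance. }
  assert (Hw0 : v0 = Cadd (Cadd (u1 (P1 w0)) (u2 (P2 w0))) (u3 (P3 w0))).
  { specialize (Hu (exist _ w0 H0)). unfold g in Hu; simpl in Hu.
    destruct (excluded_middle_informative (w0 = w0)) as [E|E]; [|contradiction]. exact Hu. }
  exists u1, u2, u3. intros [w Hw]. simpl. destruct Hw as [[Hs Hn] | Ht'].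
  - apply Hq.
  - subst w. match goal with |- f ?x = _ => replace (f x) with ft by (unfold ft; f_equal; f_equal; apply proof_irrelevance) end.
    pose proof (Hid (Fn (fun x => fst (u1 x)) (fun x => fst (u2 x)) (fun x => fst (u3 x)))) as E1.
    pose proof (Hid (Fn (fun x => snd (u1 x)) (fun x => snd (u2 x)) (fun x => snd (u3 x)))) as E2.
    unfold evR in E1, E2; simpl in E1, E2.
    pose proof (Hq q1 H1 N1) as Q1. pose proof (Hq q2 H2 N2) as Q2. pose proof (Hq q3 H3 N3) as Q3.
    pose proof (Hq q4 H4 N4) as Q4. pose proof (Hq q5 H5 N5) as Q5.
    apply (f_equal (fun z => (fst z, snd z))) in Q1, Q2, Q3, Q4, Q5, Hw0.
    unfold Cadd in *; simpl in Q1, Q2, Q3, Q4, Q5, Hw0.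
    injection Q1 as Q1a Q1b. injection Q2 as Q2a Q2b. injection Q3 as Q3a Q3b.
    injection Q4 as Q4a Q4b. injection Q5 as Q5a Q5b. injection Hw0 as W0a W0b.
    apply C_eq; simpl.
    + rewrite E1, <- Q1a, <- Q2a, <- Q3a, <- Q4a, <- Q5a, <- W0a. unfold fq1, fq2, fq3, fq4, fq5. field. exact Hc0.
    + rewrite E2, <- Q1b, <- Q2b, <- Q3b, <- Q4b, <- Q5b, <- W0b. unfold fq1, fq2, fq3, fq4, fq5. field. exact Hc0.
Qed.
End Core.


Definition ind {T : Type} (v x : T) : R :=
  if excluded_middle_informative (x = v) then 1 else 0.
Arguments ind {T} v x : simpl never.
Lemma ind_eq {T} (v : T) : ind v v = 1.
Proof. unfold ind. destruct (excluded_middle_informative (v = v)); [reflexivity|congruence]. Qed.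
Lemma ind_neq {T} (v x : T) : x <> v -> ind v x = 0.
Proof. intros H. unfold ind. destruct (excluded_middle_informative (x = v)); [congruence|reflexivity]. Qed.

Section Main.
Context {X1 X2 X3 : Type} (c : config X1 X2 X3) (Hc : config_ok c).
Notation Om := (@Omega X1 X2 X3).

Ltac hc := destruct Hc as (H1&H2&H3&H4&H5&H6&H7&H8&H9).
Lemma n_x1y1 : x1 c <> y1 c. Proof. hc; auto. Qed.
Lemma n_x2y2 : x2 c <> y2 c. Proof. hc; auto. Qed.
Lemma n_x3z3 : x3 c <> z3 c. Proof. hc; auto. Qed.
Lemma n_1x1 k : (1 <= k)%nat -> al1 c k <> x1 c. Proof. hc; intros; apply H2; auto. Qed.
Lemma n_1y1 k : (1 <= k)%nat -> al1 c k <> y1 c. Proof. hc; intros; apply H2; auto. Qed.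
Lemma n_4x1 k : (1 <= k)%nat -> al4 c k <> x1 c. Proof. hc; intros; apply H2; auto. Qed.
Lemma n_4y1 k : (1 <= k)%nat -> al4 c k <> y1 c. Proof. hc; intros; apply H2; auto. Qed.
Lemma n_14 k l : (1 <= k)%nat -> (1 <= l)%nat -> al1 c k <> al4 c l.
Proof. hc; intros; apply H3; auto. Qed.
Lemma n_11 k l : (1 <= k)%nat -> (1 <= l)%nat -> k <> l -> al1 c k <> al1 c l.
Proof. hc; intros ? ? ? E; apply H3 in E; auto. Qed.
Lemma n_44 k l : (1 <= k)%nat -> (1 <= l)%nat -> k <> l -> al4 c k <> al4 c l.
Proof. hc; intros ? ? ? E; apply H3 in E; auto. Qed.
Lemma n_2x2 k : (1 <= k)%nat -> al2 c k <> x2 c. Proof. hc; intros; apply H5; auto. Qed.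
Lemma n_2y2 k : (1 <= k)%nat -> al2 c k <> y2 c. Proof. hc; intros; apply H5; auto. Qed.
Lemma n_5x2 k : (1 <= k)%nat -> al5 c k <> x2 c. Proof. hc; intros; apply H5; auto. Qed.
Lemma n_5y2 k : (1 <= k)%nat -> al5 c k <> y2 c. Proof. hc; intros; apply H5; auto. Qed.
Lemma n_25 k l : (1 <= k)%nat -> (1 <= l)%nat -> al2 c k <> al5 c l.
Proof. hc; intros; apply H6; auto. Qed.
Lemma n_22 k l : (1 <= k)%nat -> (1 <= l)%nat -> k <> l -> al2 c k <> al2 c l.
Proof. hc; intros ? ? ? E; apply H6 in E; auto. Qed.
Lemma n_55 k l : (1 <= k)%nat -> (1 <= l)%nat -> k <> l -> al5 c k <> al5 c l.
Proof. hc; intros ? ? ? E; apply H6 in E; auto. Qed.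
Lemma n_3x3 k : (1 <= k)%nat -> al3 c k <> x3 c. Proof. hc; intros; apply H8; auto. Qed.
Lemma n_3z3 k : (1 <= k)%nat -> al3 c k <> z3 c. Proof. hc; intros; apply H8; auto. Qed.
Lemma n_33 k l : (1 <= k)%nat -> (1 <= l)%nat -> k <> l -> al3 c k <> al3 c l.
Proof. hc; intros ? ? ? E; apply H9 in E; auto. Qed.

Ltac dis1 := first
  [ exact n_x1y1 | exact n_x2y2 | exact n_x3z3
  | apply n_1x1; lia | apply n_1y1; lia | apply n_4x1; lia | apply n_4y1; lia
  | apply n_2x2; lia | apply n_2y2; lia | apply n_5x2; lia | apply n_5y2; lia
  | apply n_3x3; lia | apply n_3z3; lia
  | apply n_14; lia | apply n_25; lia
  | apply n_11; lia | apply n_44; lia | apply n_22; lia | apply n_55; lia | apply n_33; lia ].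
Ltac dis := first [ dis1 | apply not_eq_sym; dis1 ].

Ltac simpl_ind := repeat (match goal with
  | |- context [ind ?v ?v] => rewrite (ind_eq v)
  | |- context [ind ?v ?x] => rewrite (ind_neq v x) by dis
  end).

Definition tpt (k : nat) : Om := (x1 c, x2 c, al3 c k).

Definition Dset (k : nat) (w : Om) : Prop :=
  w = a c 1 \/ w = a c 2 \/ w = a c 3 \/
  exists i j, (1 <= i <= k)%nat /\ (j < 5)%nat /\ w = a_block c i j.

Definition Phi (k : nat) (s a b cc d e : R) : fn :=
  Fn (fun x => s * (ind (al1 c k) x + ind (al4 c k) x) + a * ind (al1 c (S k)) x + b * ind (al4 c (S k)) x)
     (fun x => - s * (ind (al2 c k) x + ind (al5 c k) x) + cc * ind (al2 c (S k)) x + d * ind (al5 c (S k)) x)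
     (fun x => e * ind (al3 c (S k)) x).

Ltac evt := unfold evR, Phi; cbn -[ind]; simpl_ind; ring.

Lemma Phi_D k s a b cc d e w : (1 <= k)%nat -> Dset k w -> evR (Phi k s a b cc d e) w = 0.
Proof.
  intros Hk [->|[->|[->|(i&j&Hi&Hj&->)]]]; try evt.
  destruct (Nat.eq_dec i k) as [<-|Hik];
  (destruct j as [|[|[|[|[|j]]]]]; [..|lia]);
  (destruct i as [|[|i]]; [lia| |]); evt.
Qed.


Definition q0 k : Om := (al1 c (S k), al2 c (S k), al3 c (S k)).
Definition q1 k : Om := (al4 c (S k), al5 c (S k), al3 c (S k)).
Definition q2 k : Om := (al1 c (S k), al5 c (S k), al3 c k).
Definition q3 k : Om := (al4 c (S k), al2 c (S k), x3 c).
Definition q4 k : Om := (x1 c, al2 c k, al3 c (S k)).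

Lemma blkS k : (1 <= k)%nat -> a_block c (S k) 0 = q0 k /\ a_block c (S k) 1 = q1 k /\ a_block c (S k) 2 = q2 k /\ a_block c (S k) 3 = q3 k /\ a_block c (S k) 4 = q4 k.
Proof. intros Hk; destruct k; [lia|]. repeat split; reflexivity. Qed.

Ltac evq := unfold evR, Phi, q0, q1, q2, q3, q4, tpt; cbn -[ind]; simpl_ind; ring.
Section V.
Variables (k : nat) (s a0 b cc d e : R) (Hk : (1 <= k)%nat).
Lemma V_q0 : evR (Phi k s a0 b cc d e) (q0 k) = a0 + cc + e. Proof. evq. Qed.
Lemma V_q1 : evR (Phi k s a0 b cc d e) (q1 k) = b + d + e. Proof. evq. Qed.
Lemma V_q2 : evR (Phi k s a0 b cc d e) (q2 k) = a0 + d. Proof. evq. Qed.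
Lemma V_q3 : evR (Phi k s a0 b cc d e) (q3 k) = b + cc. Proof. evq. Qed.
Lemma V_q4 : evR (Phi k s a0 b cc d e) (q4 k) = - s + e. Proof. evq. Qed.
Lemma V_tk : evR (Phi k s a0 b cc d e) (tpt k) = 0. Proof. evq. Qed.
Lemma V_tS : evR (Phi k s a0 b cc d e) (tpt (S k)) = e. Proof. evq. Qed.
End V.

Lemma van_add (S : Om -> Prop) q p : (forall w, S w -> evR p w = 0) -> evR p q = 0 ->
  forall w, addp S q w -> evR p w = 0.
Proof. intros H1 H2 w [Hw| ->]; auto. Qed.

Definition Hs k w0 : Om -> Prop := fun w => (Dset k w /\ w <> w0) \/ w = tpt k.

Lemma Phi_Hs k w0 s a0 b cc d e : (1 <= k)%nat -> forall w, Hs k w0 w -> evR (Phi k s a0 b cc d e) w = 0.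
Proof. intros Hk w [[HD _]| ->]; [apply Phi_D; auto | apply V_tk; auto]. Qed.

Ltac neq_pt := let E := fresh "E" in intro E; injection E; intros;
  match goal with H : ?x = ?y |- _ => contradict H; dis end.

Lemma tt_notD k m w : (1 <= m)%nat -> Dset k w -> w <> tpt m.
Proof.
  unfold tpt. intros Hm [->|[->|[->|(i&j&Hi&Hj&->)]]]; cbn; try neq_pt.
  destruct j as [|[|[|[|[|j]]]]]; [..|lia]; destruct i as [|[|i]]; try lia; cbn; neq_pt.
Qed.

Ltac vstep := repeat (apply van_add; [|first [rewrite V_q0 | rewrite V_q1 | rewrite V_q2 | rewrite V_q3 | rewrite V_q4 | rewrite V_tS]; auto; lra]).

Lemma step_old k w0 : (1 <= k)%nat -> w0 <> a c 1 -> good (Hs k w0) -> good (Hs (S k) w0).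
Proof.
  intros Hk Hw0 G0.
  assert (G1 : good (addp (Hs k w0) (q4 k))).
  { apply good_add with (p := Phi k 0 0 0 0 0 1); auto.
    - apply Phi_Hs; auto.
    - rewrite V_q4; auto; lra. }
  assert (G2 : good (addp (addp (Hs k w0) (q4 k)) (q3 k))).
  { apply good_add with (p := Phi k 0 0 1 0 0 0); auto.
    - vstep. apply Phi_Hs; auto.
    - rewrite V_q3; auto; lra. }
  assert (G3 : good (addp (addp (addp (Hs k w0) (q4 k)) (q3 k)) (q0 k))).
  { apply good_add with (p := Phi k 0 1 0 0 0 0); auto.
    - vstep. apply Phi_Hs; auto.
    - rewrite V_q0; auto; lra. }
  assert (G4 : good (addp (addp (addp (addp (Hs k w0) (q4 k)) (q3 k)) (q0 k)) (q2 k))).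
  { apply good_add with (p := Phi k 0 0 0 0 1 0); auto.
    - vstep. apply Phi_Hs; auto.
    - rewrite V_q2; auto; lra. }
  assert (G5 : good (addp (addp (addp (addp (addp (Hs k w0) (q4 k)) (q3 k)) (q0 k)) (q2 k)) (q1 k))).
  { apply good_add with (p := Phi k 1 0 1 (-1) 0 1); auto.
    - vstep. apply Phi_Hs; auto.
    - rewrite V_q1; auto; lra. }
  set (S5 := addp (addp (addp (addp (addp (Hs k w0) (q4 k)) (q3 k)) (q0 k)) (q2 k)) (q1 k)) in G5.
  assert (G6 : good (exch S5 (tpt k) (tpt (S k)))).
  { apply good_exch with (q1 := a c 1) (q2 := q0 k) (q3 := q1 k) (q4 := q2 k) (q5 := q3 k)
      (c0 := /2) (c1 := /2) (c2 := /2) (c3 := /2) (c4 := -/2) (c5 := -/2); auto.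
    - unfold S5, addp, Hs. tauto.
    - unfold S5, addp, Hs. left; left; left; left; left. left. split; [left; reflexivity | auto].
    - unfold S5, addp. tauto.
    - unfold S5, addp. tauto.
    - unfold S5, addp. tauto.
    - unfold S5, addp. tauto.
    - unfold tpt; cbn; neq_pt.
    - unfold tpt, q0; neq_pt.
    - unfold tpt, q1; neq_pt.
    - unfold tpt, q2; neq_pt.
    - unfold tpt, q3; neq_pt.
    - lra.
    - intros p. unfold evR, tpt, q0, q1, q2, q3; cbn. lra. }
  apply good_sub with (2 := G6).
  intros w [[HD Hn] | ->]; [|right; reflexivity].
  destruct HD as [HD|[HD|[HD|(i&j&Hi&Hj&->)]]].
  - left. split; [unfold S5, addp, Hs; left; left; left; left; left; left; split; [left; auto|auto]|].
    subst; apply tt_notD with (k := k); [auto|left; reflexivity].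
  - left. split; [unfold S5, addp, Hs; left; left; left; left; left; left; split; [right; left; auto|auto]|].
    subst; apply tt_notD with (k := k); [auto|right; left; reflexivity].
  - left. split; [unfold S5, addp, Hs; left; left; left; left; left; left; split; [right; right; left; auto|auto]|].
    subst; apply tt_notD with (k := k); [auto|right; right; left; reflexivity].
  - assert (Hi' : (i <= k)%nat \/ i = S k) by lia. destruct Hi' as [Hi'| ->].
    + assert (HD : Dset k (a_block c i j)) by (right; right; right; exists i, j; repeat split; auto; lia).
      left. split; [unfold S5, addp, Hs; left; left; left; left; left; left; split; auto|].
      apply tt_notD with (k := k); auto.
    + destruct (blkS k Hk) as (B0&B1&B2&B3&B4). left. unfold S5, addp.
      destruct j as [|[|[|[|[|j]]]]]; [..|lia].
      * rewrite B0. split; [tauto|unfold tpt, q0; neq_pt].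
      * rewrite B1. split; [tauto|unfold tpt, q1; neq_pt].
      * rewrite B2. split; [tauto|unfold tpt, q2; neq_pt].
      * rewrite B3. split; [tauto|unfold tpt, q3; neq_pt].
      * rewrite B4. split; [tauto|unfold tpt, q4; neq_pt].
Qed.


Ltac finincl k Hk :=
  let w := fresh "w" in let HD := fresh "HD" in let Hn := fresh "Hn" in
  intros w [[HD Hn] | ->]; [|unfold addp; right; reflexivity];
  destruct HD as [HD|[HD|[HD|(i&jj&Hi&Hjj&->)]]];
  [ assert (HD' : Dset k w) by (unfold Dset; tauto); unfold addp; tauto
  | assert (HD' : Dset k w) by (unfold Dset; tauto); unfold addp; tauto
  | assert (HD' : Dset k w) by (unfold Dset; tauto); unfold addp; tauto
  | assert (Hi' : (i <= k)%nat \/ i = S k) by lia; destruct Hi' as [Hi'| ->];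
    [ assert (HD' : Dset k (a_block c i jj)) by (right; right; right; exists i, jj; repeat split; auto; lia);
      unfold addp; tauto
    | destruct (blkS k Hk) as (B0&B1&B2&B3&B4);
      destruct jj as [|[|[|[|[|jj]]]]]; [..|lia];
      first [ rewrite B0 in Hn |- * | rewrite B1 in Hn |- * | rewrite B2 in Hn |- * | rewrite B3 in Hn |- * | rewrite B4 in Hn |- * ];
      unfold addp; first [ tauto | exfalso; apply Hn; reflexivity ] ] ].

Lemma step_new k j : (1 <= k)%nat -> (j < 4)%nat -> good (Dset k) -> good (Hs (S k) (a_block c (S k) j)).
Proof.
  intros Hk Hj G.
  destruct (blkS k Hk) as (E0&E1&E2&E3&E4).
  destruct j as [|[|[|[|j]]]]; [..|lia].
  - rewrite E0.
  assert (G0 : good (addp (Dset k) (q4 k))).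
  { apply good_add with (p := Phi k 0 0 0 0 0 1); [assumption| |rewrite V_q4; auto; lra].
    vstep. intros w HD; apply Phi_D; auto. }
  assert (G1 : good (addp (addp (Dset k) (q4 k)) (q1 k))).
  { apply good_add with (p := Phi k 0 0 1 0 0 0); [assumption| |rewrite V_q1; auto; lra].
    vstep. intros w HD; apply Phi_D; auto. }
  assert (G2 : good (addp (addp (addp (Dset k) (q4 k)) (q1 k)) (q2 k))).
  { apply good_add with (p := Phi k 0 1 0 0 0 0); [assumption| |rewrite V_q2; auto; lra].
    vstep. intros w HD; apply Phi_D; auto. }
  assert (G3 : good (addp (addp (addp (addp (Dset k) (q4 k)) (q1 k)) (q2 k)) (q3 k))).
  { apply good_add with (p := Phi k 0 0 0 1 0 0); [assumption| |rewrite V_q3; auto; lra].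
    vstep. intros w HD; apply Phi_D; auto. }
  assert (G4 : good (addp (addp (addp (addp (addp (Dset k) (q4 k)) (q1 k)) (q2 k)) (q3 k)) (tpt (S k)))).
  { apply good_add with (p := Phi k 1 1 0 0 (-1) 1); [assumption| |rewrite V_tS; auto; lra].
    vstep. intros w HD; apply Phi_D; auto. }
  apply good_sub with (2 := G4). finincl k Hk.
  - rewrite E1.
  assert (G0 : good (addp (Dset k) (q4 k))).
  { apply good_add with (p := Phi k 0 0 0 0 0 1); [assumption| |rewrite V_q4; auto; lra].
    vstep. intros w HD; apply Phi_D; auto. }
  assert (G1 : good (addp (addp (Dset k) (q4 k)) (q0 k))).
  { apply good_add with (p := Phi k 0 1 0 0 0 0); [assumption| |rewrite V_q0; auto; lra].
    vstep. intros w HD; apply Phi_D; auto. }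
  assert (G2 : good (addp (addp (addp (Dset k) (q4 k)) (q0 k)) (q2 k))).
  { apply good_add with (p := Phi k 0 0 0 0 1 0); [assumption| |rewrite V_q2; auto; lra].
    vstep. intros w HD; apply Phi_D; auto. }
  assert (G3 : good (addp (addp (addp (addp (Dset k) (q4 k)) (q0 k)) (q2 k)) (q3 k))).
  { apply good_add with (p := Phi k 0 0 1 0 0 0); [assumption| |rewrite V_q3; auto; lra].
    vstep. intros w HD; apply Phi_D; auto. }
  assert (G4 : good (addp (addp (addp (addp (addp (Dset k) (q4 k)) (q0 k)) (q2 k)) (q3 k)) (tpt (S k)))).
  { apply good_add with (p := Phi k 1 (-1) 0 0 1 1); [assumption| |rewrite V_tS; auto; lra].
    vstep. intros w HD; apply Phi_D; auto. }
  apply good_sub with (2 := G4). finincl k Hk.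
  - rewrite E2.
  assert (G0 : good (addp (Dset k) (q4 k))).
  { apply good_add with (p := Phi k 0 0 0 0 0 1); [assumption| |rewrite V_q4; auto; lra].
    vstep. intros w HD; apply Phi_D; auto. }
  assert (G1 : good (addp (addp (Dset k) (q4 k)) (q3 k))).
  { apply good_add with (p := Phi k 0 0 1 0 0 0); [assumption| |rewrite V_q3; auto; lra].
    vstep. intros w HD; apply Phi_D; auto. }
  assert (G2 : good (addp (addp (addp (Dset k) (q4 k)) (q3 k)) (q0 k))).
  { apply good_add with (p := Phi k 0 1 0 0 0 0); [assumption| |rewrite V_q0; auto; lra].
    vstep. intros w HD; apply Phi_D; auto. }
  assert (G3 : good (addp (addp (addp (addp (Dset k) (q4 k)) (q3 k)) (q0 k)) (q1 k))).
  { apply good_add with (p := Phi k 0 0 0 0 1 0); [assumption| |rewrite V_q1; auto; lra].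
    vstep. intros w HD; apply Phi_D; auto. }
  assert (G4 : good (addp (addp (addp (addp (addp (Dset k) (q4 k)) (q3 k)) (q0 k)) (q1 k)) (tpt (S k)))).
  { apply good_add with (p := Phi k 1 (-1) 0 0 (-1) 1); [assumption| |rewrite V_tS; auto; lra].
    vstep. intros w HD; apply Phi_D; auto. }
  apply good_sub with (2 := G4). finincl k Hk.
  - rewrite E3.
  assert (G0 : good (addp (Dset k) (q4 k))).
  { apply good_add with (p := Phi k 0 0 0 0 0 1); [assumption| |rewrite V_q4; auto; lra].
    vstep. intros w HD; apply Phi_D; auto. }
  assert (G1 : good (addp (addp (Dset k) (q4 k)) (q2 k))).
  { apply good_add with (p := Phi k 0 1 0 0 0 0); [assumption| |rewrite V_q2; auto; lra].
    vstep. intros w HD; apply Phi_D; auto. }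
  assert (G2 : good (addp (addp (addp (Dset k) (q4 k)) (q2 k)) (q0 k))).
  { apply good_add with (p := Phi k 0 0 0 1 0 0); [assumption| |rewrite V_q0; auto; lra].
    vstep. intros w HD; apply Phi_D; auto. }
  assert (G3 : good (addp (addp (addp (addp (Dset k) (q4 k)) (q2 k)) (q0 k)) (q1 k))).
  { apply good_add with (p := Phi k 0 0 1 0 0 0); [assumption| |rewrite V_q1; auto; lra].
    vstep. intros w HD; apply Phi_D; auto. }
  assert (G4 : good (addp (addp (addp (addp (addp (Dset k) (q4 k)) (q2 k)) (q0 k)) (q1 k)) (tpt (S k)))).
  { apply good_add with (p := Phi k 1 1 0 (-2) (-1) 1); [assumption| |rewrite V_tS; auto; lra].
    vstep. intros w HD; apply Phi_D; auto. }
  apply good_sub with (2 := G4). finincl k Hk.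
Qed.


Definition bfn (cx1 cy1 cA cB cx2 cy2 cC cD cx3 cz3 cE : R) : fn :=
  Fn (fun x => cx1 * ind (x1 c) x + cy1 * ind (y1 c) x + cA * ind (al1 c 1) x + cB * ind (al4 c 1) x)
     (fun x => cx2 * ind (x2 c) x + cy2 * ind (y2 c) x + cC * ind (al2 c 1) x + cD * ind (al5 c 1) x)
     (fun x => cx3 * ind (x3 c) x + cz3 * ind (z3 c) x + cE * ind (al3 c 1) x).
Ltac evb0 := unfold evR, bfn, tpt; cbn -[ind]; simpl_ind; lra.
Ltac bvan := repeat (apply van_add; [| evb0]); intros ? [].
Ltac evb := unfold evR, bfn, tpt; cbn -[ind]; simpl_ind; lra.
Lemma base_D1 : good (addp (addp (addp (addp (addp (addp (addp (addp (fun _ : Om => False) (a c 1)) (a c 2)) (a c 3)) (a_block c 1 0)) (a_block c 1 1)) (a_block c 1 2)) (a_block c 1 3)) (a_block c 1 4)).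
Proof.
  pose proof (@good_empty X1 X2 X3) as G.
  apply (good_add _ (a c 1) (bfn (1) (0) (0) (0) (0) (0) (0) (0) (0) (0) (0))) in G; [| bvan | evb].
  apply (good_add _ (a c 2) (bfn (0) (1) (0) (0) (0) (0) (0) (0) (0) (0) (0))) in G; [| bvan | evb].
  apply (good_add _ (a c 3) (bfn (0) (0) (0) (0) (0) (0) (0) (0) (0) (1) (0))) in G; [| bvan | evb].
  apply (good_add _ (a_block c 1 0) (bfn (0) (0) (1) (0) (0) (0) (0) (0) (0) (0) (0))) in G; [| bvan | evb].
  apply (good_add _ (a_block c 1 1) (bfn (0) (0) (0) (1) (0) (0) (0) (0) (0) (0) (0))) in G; [| bvan | evb].
  apply (good_add _ (a_block c 1 2) (bfn (0) (0) (0) (-1) (0) (0) (0) (1) (0) (0) (0))) in G; [| bvan | evb].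
  apply (good_add _ (a_block c 1 3) (bfn (0) (0) (0) (-1) (0) (0) (-1) (0) (0) (0) (1))) in G; [| bvan | evb].
  apply (good_add _ (a_block c 1 4) (bfn (-2) (0) (1) (0) (2) (0) (0) (1) (0) (-2) (-1))) in G; [| bvan | evb].
  exact G.
Qed.

Lemma base_a2 : good (addp (addp (addp (addp (addp (addp (addp (addp (fun _ : Om => False) (a c 1)) (a c 3)) (a_block c 1 0)) (a_block c 1 1)) (a_block c 1 4)) (a_block c 1 2)) (a_block c 1 3)) (tpt 1)).
Proof.
  pose proof (@good_empty X1 X2 X3) as G.
  apply (good_add _ (a c 1) (bfn (1) (0) (0) (0) (0) (0) (0) (0) (0) (0) (0))) in G; [| bvan | evb].
  apply (good_add _ (a c 3) (bfn (0) (1) (0) (0) (0) (0) (0) (0) (0) (0) (0))) in G; [| bvan | evb].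
  apply (good_add _ (a_block c 1 0) (bfn (0) (0) (1) (0) (0) (0) (0) (0) (0) (0) (0))) in G; [| bvan | evb].
  apply (good_add _ (a_block c 1 1) (bfn (0) (0) (0) (1) (0) (0) (0) (0) (0) (0) (0))) in G; [| bvan | evb].
  apply (good_add _ (a_block c 1 4) (bfn (0) (0) (0) (0) (0) (1) (0) (0) (0) (0) (0))) in G; [| bvan | evb].
  apply (good_add _ (a_block c 1 2) (bfn (0) (-1) (0) (0) (0) (0) (0) (0) (0) (1) (0))) in G; [| bvan | evb].
  apply (good_add _ (a_block c 1 3) (bfn (0) (1) (0) (0) (-1) (0) (0) (0) (1) (0) (0))) in G; [| bvan | evb].
  apply (good_add _ (tpt 1) (bfn (0) (-2) (-1) (0) (1) (0) (1) (0) (-1) (1) (0))) in G; [| bvan | evb].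
  exact G.
Qed.

Lemma base_a3 : good (addp (addp (addp (addp (addp (addp (addp (addp (fun _ : Om => False) (a c 1)) (a c 2)) (a_block c 1 0)) (a_block c 1 1)) (a_block c 1 2)) (a_block c 1 4)) (a_block c 1 3)) (tpt 1)).
Proof.
  pose proof (@good_empty X1 X2 X3) as G.
  apply (good_add _ (a c 1) (bfn (1) (0) (0) (0) (0) (0) (0) (0) (0) (0) (0))) in G; [| bvan | evb].
  apply (good_add _ (a c 2) (bfn (0) (1) (0) (0) (0) (0) (0) (0) (0) (0) (0))) in G; [| bvan | evb].
  apply (good_add _ (a_block c 1 0) (bfn (0) (0) (1) (0) (0) (0) (0) (0) (0) (0) (0))) in G; [| bvan | evb].
  apply (good_add _ (a_block c 1 1) (bfn (0) (0) (0) (1) (0) (0) (0) (0) (0) (0) (0))) in G; [| bvan | evb].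
  apply (good_add _ (a_block c 1 2) (bfn (0) (0) (0) (0) (0) (0) (0) (0) (0) (1) (0))) in G; [| bvan | evb].
  apply (good_add _ (a_block c 1 4) (bfn (0) (-1) (0) (0) (0) (1) (0) (0) (0) (0) (0))) in G; [| bvan | evb].
  apply (good_add _ (a_block c 1 3) (bfn (0) (0) (-1) (0) (0) (0) (1) (0) (0) (1) (0))) in G; [| bvan | evb].
  apply (good_add _ (tpt 1) (bfn (0) (1) (-1) (0) (1) (0) (1) (0) (-1) (1) (0))) in G; [| bvan | evb].
  exact G.
Qed.

Lemma base_a4 : good (addp (addp (addp (addp (addp (addp (addp (addp (fun _ : Om => False) (a c 1)) (a c 2)) (a c 3)) (a_block c 1 1)) (a_block c 1 2)) (a_block c 1 3)) (a_block c 1 4)) (tpt 1)).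
Proof.
  pose proof (@good_empty X1 X2 X3) as G.
  apply (good_add _ (a c 1) (bfn (1) (0) (0) (0) (0) (0) (0) (0) (0) (0) (0))) in G; [| bvan | evb].
  apply (good_add _ (a c 2) (bfn (0) (1) (0) (0) (0) (0) (0) (0) (0) (0) (0))) in G; [| bvan | evb].
  apply (good_add _ (a c 3) (bfn (0) (0) (0) (0) (0) (0) (0) (0) (0) (1) (0))) in G; [| bvan | evb].
  apply (good_add _ (a_block c 1 1) (bfn (0) (0) (0) (1) (0) (0) (0) (0) (0) (0) (0))) in G; [| bvan | evb].
  apply (good_add _ (a_block c 1 2) (bfn (0) (0) (1) (0) (0) (0) (0) (0) (0) (0) (0))) in G; [| bvan | evb].
  apply (good_add _ (a_block c 1 3) (bfn (0) (0) (0) (0) (0) (0) (1) (0) (0) (0) (0))) in G; [| bvan | evb].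
  apply (good_add _ (a_block c 1 4) (bfn (0) (0) (0) (-1) (0) (0) (1) (0) (0) (0) (1))) in G; [| bvan | evb].
  apply (good_add _ (tpt 1) (bfn (0) (-1/2) (-1) (0) (-1/2) (0) (-1/2) (0) (1/2) (1) (0))) in G; [| bvan | evb].
  exact G.
Qed.

Lemma base_a5 : good (addp (addp (addp (addp (addp (addp (addp (addp (fun _ : Om => False) (a c 1)) (a c 2)) (a c 3)) (a_block c 1 0)) (a_block c 1 2)) (a_block c 1 3)) (a_block c 1 4)) (tpt 1)).
Proof.
  pose proof (@good_empty X1 X2 X3) as G.
  apply (good_add _ (a c 1) (bfn (1) (0) (0) (0) (0) (0) (0) (0) (0) (0) (0))) in G; [| bvan | evb].
  apply (good_add _ (a c 2) (bfn (0) (1) (0) (0) (0) (0) (0) (0) (0) (0) (0))) in G; [| bvan | evb].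
  apply (good_add _ (a c 3) (bfn (0) (0) (0) (0) (0) (0) (0) (0) (0) (1) (0))) in G; [| bvan | evb].
  apply (good_add _ (a_block c 1 0) (bfn (0) (0) (1) (0) (0) (0) (0) (0) (0) (0) (0))) in G; [| bvan | evb].
  apply (good_add _ (a_block c 1 2) (bfn (0) (0) (0) (0) (0) (0) (0) (1) (0) (0) (0))) in G; [| bvan | evb].
  apply (good_add _ (a_block c 1 3) (bfn (0) (0) (0) (1) (0) (0) (0) (0) (0) (0) (0))) in G; [| bvan | evb].
  apply (good_add _ (a_block c 1 4) (bfn (0) (0) (0) (1) (0) (0) (-1) (0) (0) (0) (1))) in G; [| bvan | evb].
  apply (good_add _ (tpt 1) (bfn (0) (1/2) (0) (1/2) (1/2) (0) (0) (1) (-1/2) (-1) (0))) in G; [| bvan | evb].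
  exact G.
Qed.

Lemma base_a6 : good (addp (addp (addp (addp (addp (addp (addp (addp (fun _ : Om => False) (a c 1)) (a c 2)) (a c 3)) (a_block c 1 0)) (a_block c 1 1)) (a_block c 1 3)) (a_block c 1 4)) (tpt 1)).
Proof.
  pose proof (@good_empty X1 X2 X3) as G.
  apply (good_add _ (a c 1) (bfn (1) (0) (0) (0) (0) (0) (0) (0) (0) (0) (0))) in G; [| bvan | evb].
  apply (good_add _ (a c 2) (bfn (0) (1) (0) (0) (0) (0) (0) (0) (0) (0) (0))) in G; [| bvan | evb].
  apply (good_add _ (a c 3) (bfn (0) (0) (0) (0) (0) (0) (0) (0) (0) (1) (0))) in G; [| bvan | evb].
  apply (good_add _ (a_block c 1 0) (bfn (0) (0) (1) (0) (0) (0) (0) (0) (0) (0) (0))) in G; [| bvan | evb].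
  apply (good_add _ (a_block c 1 1) (bfn (0) (0) (0) (1) (0) (0) (0) (0) (0) (0) (0))) in G; [| bvan | evb].
  apply (good_add _ (a_block c 1 3) (bfn (0) (0) (0) (-1) (0) (0) (0) (1) (0) (0) (0))) in G; [| bvan | evb].
  apply (good_add _ (a_block c 1 4) (bfn (1) (0) (0) (0) (-1) (0) (0) (0) (0) (1) (0))) in G; [| bvan | evb].
  apply (good_add _ (tpt 1) (bfn (0) (-1/2) (1/2) (0) (-1/2) (0) (-1/2) (0) (1/2) (1) (0))) in G; [| bvan | evb].
  exact G.
Qed.

Lemma base_a7 : good (addp (addp (addp (addp (addp (addp (addp (addp (fun _ : Om => False) (a c 1)) (a c 2)) (a c 3)) (a_block c 1 0)) (a_block c 1 1)) (a_block c 1 2)) (a_block c 1 4)) (tpt 1)).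
Proof.
  pose proof (@good_empty X1 X2 X3) as G.
  apply (good_add _ (a c 1) (bfn (1) (0) (0) (0) (0) (0) (0) (0) (0) (0) (0))) in G; [| bvan | evb].
  apply (good_add _ (a c 2) (bfn (0) (1) (0) (0) (0) (0) (0) (0) (0) (0) (0))) in G; [| bvan | evb].
  apply (good_add _ (a c 3) (bfn (0) (0) (0) (0) (0) (0) (0) (0) (0) (1) (0))) in G; [| bvan | evb].
  apply (good_add _ (a_block c 1 0) (bfn (0) (0) (1) (0) (0) (0) (0) (0) (0) (0) (0))) in G; [| bvan | evb].
  apply (good_add _ (a_block c 1 1) (bfn (0) (0) (0) (1) (0) (0) (0) (0) (0) (0) (0))) in G; [| bvan | evb].
  apply (good_add _ (a_block c 1 2) (bfn (0) (0) (0) (-1) (0) (0) (0) (1) (0) (0) (0))) in G; [| bvan | evb].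
  apply (good_add _ (a_block c 1 4) (bfn (0) (0) (0) (-1) (0) (0) (-1) (0) (0) (0) (1))) in G; [| bvan | evb].
  apply (good_add _ (tpt 1) (bfn (0) (-1/2) (-1) (0) (-1/2) (0) (1) (0) (1/2) (1) (0))) in G; [| bvan | evb].
  exact G.
Qed.

Lemma base_a8 : good (addp (addp (addp (addp (addp (addp (addp (addp (fun _ : Om => False) (a c 1)) (a c 2)) (a c 3)) (a_block c 1 0)) (a_block c 1 1)) (a_block c 1 2)) (a_block c 1 3)) (tpt 1)).
Proof.
  pose proof (@good_empty X1 X2 X3) as G.
  apply (good_add _ (a c 1) (bfn (1) (0) (0) (0) (0) (0) (0) (0) (0) (0) (0))) in G; [| bvan | evb].
  apply (good_add _ (a c 2) (bfn (0) (1) (0) (0) (0) (0) (0) (0) (0) (0) (0))) in G; [| bvan | evb].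
  apply (good_add _ (a c 3) (bfn (0) (0) (0) (0) (0) (0) (0) (0) (0) (1) (0))) in G; [| bvan | evb].
  apply (good_add _ (a_block c 1 0) (bfn (0) (0) (1) (0) (0) (0) (0) (0) (0) (0) (0))) in G; [| bvan | evb].
  apply (good_add _ (a_block c 1 1) (bfn (0) (0) (0) (1) (0) (0) (0) (0) (0) (0) (0))) in G; [| bvan | evb].
  apply (good_add _ (a_block c 1 2) (bfn (0) (0) (0) (-1) (0) (0) (0) (1) (0) (0) (0))) in G; [| bvan | evb].
  apply (good_add _ (a_block c 1 3) (bfn (0) (0) (0) (-1) (0) (0) (-1) (0) (0) (0) (1))) in G; [| bvan | evb].
  apply (good_add _ (tpt 1) (bfn (-2) (0) (1) (0) (2) (0) (0) (1) (0) (-2) (-1))) in G; [| bvan | evb].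
  exact G.
Qed.


Ltac inset := unfold addp; solve [repeat (first [right; reflexivity | left])].

Lemma step_D k : (1 <= k)%nat -> good (Dset k) -> good (Dset (S k)).
Proof.
  intros Hk G.
  assert (G1 : good (addp (Dset k) (q4 k))).
  { apply good_add with (p := Phi k 0 0 0 0 0 1); [assumption| |rewrite V_q4; auto; lra].
    intros w HD; apply Phi_D; auto. }
  assert (G2 : good (addp (addp (Dset k) (q4 k)) (q3 k))).
  { apply good_add with (p := Phi k 0 0 1 0 0 0); [assumption| |rewrite V_q3; auto; lra].
    vstep. intros w HD; apply Phi_D; auto. }
  assert (G3 : good (addp (addp (addp (Dset k) (q4 k)) (q3 k)) (q0 k))).
  { apply good_add with (p := Phi k 0 1 0 0 0 0); [assumption| |rewrite V_q0; auto; lra].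
    vstep. intros w HD; apply Phi_D; auto. }
  assert (G4 : good (addp (addp (addp (addp (Dset k) (q4 k)) (q3 k)) (q0 k)) (q2 k))).
  { apply good_add with (p := Phi k 0 0 0 0 1 0); [assumption| |rewrite V_q2; auto; lra].
    vstep. intros w HD; apply Phi_D; auto. }
  assert (G5 : good (addp (addp (addp (addp (addp (Dset k) (q4 k)) (q3 k)) (q0 k)) (q2 k)) (q1 k))).
  { apply good_add with (p := Phi k 1 0 1 (-1) 0 1); [assumption| |rewrite V_q1; auto; lra].
    vstep. intros w HD; apply Phi_D; auto. }
  apply good_sub with (2 := G5).
  intros w HD. destruct HD as [HD|[HD|[HD|(i&jj&Hi&Hjj&->)]]].
  - assert (HD' : Dset k w) by (unfold Dset; tauto); unfold addp; tauto.
  - assert (HD' : Dset k w) by (unfold Dset; tauto); unfold addp; tauto.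
  - assert (HD' : Dset k w) by (unfold Dset; tauto); unfold addp; tauto.
  - assert (Hi' : (i <= k)%nat \/ i = S k) by lia; destruct Hi' as [Hi'| ->].
    + assert (HD' : Dset k (a_block c i jj)) by (right; right; right; exists i, jj; repeat split; auto; lia).
      unfold addp; tauto.
    + destruct (blkS k Hk) as (B0&B1&B2&B3&B4).
      destruct jj as [|[|[|[|[|jj]]]]]; [..|lia];
      first [ rewrite B0 | rewrite B1 | rewrite B2 | rewrite B3 | rewrite B4 ]; unfold addp; tauto.
Qed.

Definition Sup k w0 := w0 = a c 2 \/ w0 = a c 3 \/ w0 = a_block c 1 4 \/
  exists i j, (1 <= i <= k)%nat /\ (j < 4)%nat /\ w0 = a_block c i j.

Lemma sup_ne_a1 k w0 : Sup k w0 -> w0 <> a c 1.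
Proof.
  intros [->|[->|[->|(i&j&Hi&Hj&->)]]]; cbn; try neq_pt.
  destruct j as [|[|[|[|j]]]]; [..|lia]; destruct i as [|[|i]]; try lia; cbn; neq_pt.
Qed.

Ltac binc := let w := fresh "w" in let HD := fresh "HD" in let Hn := fresh "Hn" in
  intros w [[HD Hn] | ->]; [|inset];
  destruct HD as [->|[->|[->|(ii&jj&Hii&Hjj&->)]]];
  [ first [inset | exfalso; apply Hn; reflexivity] .. |
    assert (ii = 1%nat) by lia; subst ii;
    destruct jj as [|[|[|[|[|jj]]]]]; [..|lia]; first [inset | exfalso; apply Hn; reflexivity] ].

Lemma inv_all k : (1 <= k)%nat -> good (Dset k) /\ forall w0, Sup k w0 -> good (Hs k w0).
Proof.
  induction k as [|k IH]; intros Hk; [lia|].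
  destruct (Nat.eq_dec k 0) as [->|Hk0].
  - split.
    + apply good_sub with (2 := base_D1).
      intros w HD. destruct HD as [->|[->|[->|(i&jj&Hi&Hjj&->)]]]; try inset.
      assert (i = 1%nat) by lia; subst i.
      destruct jj as [|[|[|[|[|jj]]]]]; [..|lia]; inset.
    + intros w0 [->|[->|[->|(i&j&Hi&Hj&->)]]].
      * apply good_sub with (2 := base_a2). binc.
      * apply good_sub with (2 := base_a3). binc.
      * apply good_sub with (2 := base_a8). binc.
      * assert (i = 1%nat) by lia; subst i.
        destruct j as [|[|[|[|j]]]]; [..|lia].
        -- apply good_sub with (2 := base_a4). binc.
        -- apply good_sub with (2 := base_a5). binc.
        -- apply good_sub with (2 := base_a6). binc.
        -- apply good_sub with (2 := base_a7). binc.
  - destruct (IH ltac:(lia)) as [GD GH]. split.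
    + apply step_D; auto; lia.
    + intros w0 HS.
      assert (HS' : Sup k w0 \/ exists j, (j < 4)%nat /\ w0 = a_block c (S k) j).
      { destruct HS as [H|[H|[H|(i&j&Hi&Hj&H)]]]; [left; unfold Sup; tauto .. |].
        assert (Hi' : (i <= k)%nat \/ i = S k) by lia. destruct Hi' as [Hi'| ->].
        - left. right; right; right. exists i, j; repeat split; auto; lia.
        - right. exists j; auto. }
      destruct HS' as [HS'|(j&Hj&->)].
      * apply step_old; [lia| apply (sup_ne_a1 k); auto | apply GH; auto].
      * apply step_new; auto; lia.
Qed.


Lemma a_blockE q r : (r < 5)%nat -> a c (5 * q + 4 + r) = a_block c (S q) r.
Proof.
  intros Hr.
  replace (5 * q + 4 + r)%nat with (S (S (S (S (5 * q + r)))))%nat by lia.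
  unfold a.
  replace (S (S (S (S (5 * q + r)))) - 4)%nat with (5 * q + r)%nat by lia.
  rewrite <- (Nat.div_unique (5 * q + r) 5 q r) by lia.
  rewrite <- (Nat.mod_unique (5 * q + r) 5 q r) by lia.
  reflexivity.
Qed.

Lemma idx_dec i : (1 <= i)%nat -> i = 1%nat \/ i = 2%nat \/ i = 3%nat \/
  exists q r, (r < 5)%nat /\ i = (5 * q + 4 + r)%nat.
Proof.
  intros Hi. destruct (le_lt_dec 4 i) as [H|H]; [|lia].
  right; right; right. exists ((i - 4) / 5)%nat, ((i - 4) mod 5)%nat. split.
  - apply Nat.mod_upper_bound; lia.
  - pose proof (Nat.div_mod (i - 4) 5 ltac:(lia)). lia.
Qed.

Lemma D_Dset n w : D c n w <-> Dset n w.
Proof.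
  split.
  - intros (m&Hm&->). destruct (idx_dec m ltac:(lia)) as [->|[->|[->|(q&r&Hr&->)]]].
    + left; reflexivity.
    + right; left; reflexivity.
    + right; right; left; reflexivity.
    + rewrite a_blockE by auto. right; right; right. exists (S q), r. repeat split; auto; lia.
  - intros [->|[->|[->|(i&j&Hi&Hj&->)]]].
    + exists 1%nat; split; [lia|reflexivity].
    + exists 2%nat; split; [lia|reflexivity].
    + exists 3%nat; split; [lia|reflexivity].
    + exists (5 * (i - 1) + 4 + j)%nat. split; [lia|].
      rewrite a_blockE by auto. f_equal. lia.
Qed.

Lemma last_eq n : (1 <= n)%nat -> a c (5 * n + 3) = a_block c n 4.
Proof.
  intros Hn. replace (5 * n + 3)%nat with (5 * (n - 1) + 4 + 4)%nat by lia.
  rewrite a_blockE by lia. f_equal; lia.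
Qed.

Lemma psi_gen n k s v : (1 <= k)%nat -> Dset n v -> v <> a_block c (S k) 4 ->
  evR (Phi k s 0 0 0 0 0) v = 0.
Proof.
  intros Hk HD Hne.
  destruct HD as [->|[->|[->|(i&j&Hi&Hj&->)]]]; try evt.
  destruct (Nat.eq_dec i k) as [<-|Hik].
  { destruct j as [|[|[|[|[|j]]]]]; [..|lia]; destruct i as [|[|i]]; try lia; evt. }
  destruct (Nat.eq_dec i (S k)) as [->|Hik2].
  { destruct k as [|k]; [lia|].
    destruct j as [|[|[|[|[|j]]]]]; [evt|evt|evt|evt|exfalso; apply Hne; reflexivity|lia]. }
  destruct j as [|[|[|[|[|j]]]]]; [..|lia]; destruct i as [|[|i]]; try lia; evt.
Qed.

Lemma blk_inj q q' r r' : (r < 5)%nat -> (r' < 5)%nat ->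
  a_block c (S q) r = a_block c (S q') r' -> q = q' /\ r = r'.
Proof.
  intros Hr Hr' E.
  destruct (Nat.eq_dec q q') as [<-|Hq].
  - destruct r as [|[|[|[|[|r]]]]]; [..|lia]; destruct r' as [|[|[|[|[|r']]]]]; try lia;
    try (split; reflexivity); exfalso; revert E; destruct q as [|q]; cbn; neq_pt.
  - exfalso. revert E.
    destruct r as [|[|[|[|[|r]]]]]; [..|lia]; destruct r' as [|[|[|[|[|r']]]]]; try lia;
    destruct q as [|q]; destruct q' as [|q']; try lia; cbn; neq_pt.
Qed.

Lemma a_inj i j : (1 <= i)%nat -> (1 <= j)%nat -> a c i = a c j -> i = j.
Proof.
  intros Hi Hj E.
  destruct (idx_dec i Hi) as [->|[->|[->|(q&r&Hr&->)]]];
  destruct (idx_dec j Hj) as [->|[->|[->|(q'&r'&Hr'&->)]]]; try reflexivity;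
  try (rewrite a_blockE in E by auto); try (rewrite a_blockE in E by auto);
  try (exfalso; revert E; cbn; neq_pt).
  - exfalso; revert E. destruct r' as [|[|[|[|[|r']]]]]; try lia; destruct q' as [|q']; cbn; neq_pt.
  - exfalso; revert E. destruct r' as [|[|[|[|[|r']]]]]; try lia; destruct q' as [|q']; cbn; neq_pt.
  - exfalso; revert E. destruct r' as [|[|[|[|[|r']]]]]; try lia; destruct q' as [|q']; cbn; neq_pt.
  - exfalso; revert E. destruct r as [|[|[|[|[|r]]]]]; try lia; destruct q as [|q]; cbn; neq_pt.
  - exfalso; revert E. destruct r as [|[|[|[|[|r]]]]]; try lia; destruct q as [|q]; cbn; neq_pt.
  - exfalso; revert E. destruct r as [|[|[|[|[|r]]]]]; try lia; destruct q as [|q]; cbn; neq_pt.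
  - apply blk_inj in E; auto. lia.
Qed.

Lemma a_neq_b n i : (1 <= n)%nat -> (1 <= i)%nat -> a c i <> b c n.
Proof.
  intros Hn Hi. unfold b.
  destruct (idx_dec i Hi) as [->|[->|[->|(q&r&Hr&->)]]]; try (cbn; neq_pt).
  rewrite a_blockE by auto.
  destruct r as [|[|[|[|[|r]]]]]; try lia; destruct q as [|q]; cbn; neq_pt.
Qed.


Ltac evn := unfold evR, Phi, b; cbn -[ind]; simpl_ind; lra.

Lemma part1 n : (1 <= n)%nat -> forall P : Om -> Prop, subset P (F c n) -> (exists w, F c n w /\ ~ P w) ->
  P (a c 1) -> P (a c (5 * n + 3)) -> ~ full P.
Proof.
  intros Hn P HPF [w0 [HF0 HnP0]] Ha1 Hl [HPg Hmax].
  rewrite last_eq in Hl by auto.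
  assert (Contra : forall t, good (addp P t) -> box P t -> ~ P t -> False).
  { intros t G Hb Ht. apply Ht.
    refine (Hmax (addp P t) G _ _ t (or_intror eq_refl)).
    - intros w Hw; left; auto.
    - intros w [Hw| ->]; auto. unfold box; repeat split; exists w; split; auto. }
  assert (HFD : forall v, F c n v -> Dset n v \/ v = b c n).
  { intros v [HD|Hb]; [left; apply D_Dset; auto | right; auto]. }
  destruct (classic (exists w, Sup n w /\ ~ P w)) as [(w&Hsw&HnPw)|HB].
  - destruct (inv_all n Hn) as [_ GH].
    assert (G : good (addp (Hs n w) (b c n))).
    { apply good_add with (p := Phi n 1 0 0 0 0 0); [apply GH; auto | apply Phi_Hs; auto | evn]. }
    apply (Contra (tpt n)).
    + apply good_sub with (2 := G). intros v [Hv| ->]; [|left; right; reflexivity].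
      destruct (HFD v (HPF v Hv)) as [HD| ->];
        [left; left; split; auto; intros ->; contradiction | right; reflexivity].
    + unfold box, tpt. split; [|split].
      * exists (a c 1); split; auto.
      * exists (a c 1); split; auto.
      * exists (a_block c n 4); split; auto.
    + intros Ht. destruct (HFD _ (HPF _ Ht)) as [HD|Hb].
      * apply (tt_notD n n (tpt n)); auto.
      * revert Hb; unfold tpt, b; neq_pt.
  - assert (HS : forall w, Sup n w -> P w).
    { intros w Hw. apply NNPP. intro. apply HB. eauto. }
    destruct (HFD w0 HF0) as [HD| ->].
    + destruct HD as [->|[->|[->|(i&j&Hi&Hj&->)]]].
      * contradiction.
      * apply HnP0, HS; left; reflexivity.
      * apply HnP0, HS; right; left; reflexivity.
      * destruct (le_lt_dec 4 j) as [Hj4|Hj4].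
        2:{ apply HnP0, HS. right; right; right. exists i, j; repeat split; auto; lia. }
        assert (j = 4%nat) by lia; subst j.
        destruct (Nat.eq_dec i 1) as [->|Hi1]; [apply HnP0, HS; right; right; left; reflexivity|].
        destruct (Nat.eq_dec i n) as [->|Hin]; [contradiction|].
        destruct i as [|k]; [lia|].
        assert (Hvan : forall v, P v -> evR (Phi k 1 0 0 0 0 0) v = 0).
        { intros v Hv. destruct (HFD v (HPF v Hv)) as [HD| ->].
          - apply psi_gen with (n := n); [lia|auto|intros ->; contradiction].
          - unfold evR, Phi, b; cbn -[ind]; simpl_ind; ring. }
        assert (Hval : evR (Phi k 1 0 0 0 0 0) (al1 c k, x2 c, x3 c) = 1).
        { unfold evR, Phi; cbn -[ind]; simpl_ind; ring. }
        apply (Contra (al1 c k, x2 c, x3 c)).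
        -- apply good_add with (p := Phi k 1 0 0 0 0 0); auto. lra.
        -- unfold box. split; [|split].
           ++ exists (a_block c k 0); split; [apply HS; right; right; right; exists k, 0%nat; repeat split; lia | ].
              destruct k as [|k]; [lia|reflexivity].
           ++ exists (a c 1); split; auto.
           ++ exists (a c 1); split; auto.
        -- intros Ht. apply Hvan in Ht. lra.
    + assert (Hvan : forall v, P v -> evR (Phi n 1 0 0 0 0 0) v = 0).
      { intros v Hv. destruct (HFD v (HPF v Hv)) as [HD| ->]; [apply Phi_D; auto|contradiction]. }
      assert (Hval : evR (Phi n 1 0 0 0 0 0) (al1 c n, x2 c, x3 c) = 1).
      { unfold evR, Phi; cbn -[ind]; simpl_ind; ring. }
      apply (Contra (al1 c n, x2 c, x3 c)).
      * apply good_add with (p := Phi n 1 0 0 0 0 0); auto. lra.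
      * unfold box. split; [|split].
        -- exists (a_block c n 0); split; [apply HS; right; right; right; exists n, 0%nat; repeat split; lia | ].
           destruct n as [|n]; [lia|reflexivity].
        -- exists (a c 1); split; auto.
        -- exists (a c 1); split; auto.
      * intros Ht. apply Hvan in Ht. lra.
Qed.

End Main.

Close Scope R_scope.

Theorem mainTheorem7 :
  forall (X1 X2 X3 : Type) (c : config X1 X2 X3), config_ok c ->
  forall n : nat, (1 <= n)%nat ->
    (forall P : @Omega X1 X2 X3 -> Prop,
        subset P (F c n) -> (exists w, F c n w /\ ~ P w) ->
        P (a c 1) -> P (a c (5 * n + 3)) -> ~ full P) /\
    (full (F c n) ->
       forall P : @Omega X1 X2 X3 -> Prop,
         subset P (F c n) -> full P -> P (a c 1) -> P (a c (5 * n + 3)) ->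
         forall w, P w <-> F c n w) /\
    (forall i j, (1 <= i <= 5 * n + 3)%nat -> (1 <= j <= 5 * n + 3)%nat ->
        a c i = a c j -> i = j) /\
    (forall i, (1 <= i <= 5 * n + 3)%nat -> a c i <> b c n).
Proof.
  intros X1 X2 X3 c Hc n Hn. split; [|split; [|split]].
  - intros P; apply (part1 c Hc n Hn P).
  - intros _ P HPF HfP Ha1 Hl w. split; [apply HPF|]. intros HF. apply NNPP; intros HnP.
    exact (part1 c Hc n Hn P HPF (ex_intro _ w (conj HF HnP)) Ha1 Hl HfP).
  - intros i j Hi Hj E. apply (a_inj c Hc i j); auto; lia.
  - intros i Hi. apply (a_neq_b c Hc); lia.
Qed.
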